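(* Let $k\ge 2$ and $G=\Theta(2,2,2k)$ with end vertices $u$ and $v$. Let $m\ge 3$ and let $L$ be an $m$-assignment for $G$ with $L(u)=L(v)$. Then $P(G,L)\ge P(G,m)$.
   Context: $\Theta(l_1,l_2,l_3)$ denotes two end vertices joined by three internally disjoint paths of lengths $l_1,l_2,l_3$. An $m$-assignment $L$ assigns to each vertex $w$ a set $L(w)$ of $m$ colors; $P(G,L)$ is the number of proper colorings $f$ of $G$ with $f(w)\in L(w)$ for all $w$. $P(G,m)$ is the chromatic polynomial of $G$. *)

(* Defs.v *)
From mathcomp Require Import all_boot.
From mathcomp Require Import zify.
Set Implicit Arguments. Unset Strict Implicit. Unset Printing Implicit Defensive.

(* Theta graph Theta(l1,l2,l3), lengths l_i >= 1.
   Vertices: 'I_(l1+l2+l3-1) = 2 ends + (l1-1)+(l2-1)+(l3-1) internal vertices.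
   End vertices: u = 0, v = 1.
   Path i (length l) with internal-vertex offset off visits
   0, off, off+1, ..., off+l-2, 1. *)
Definition path_vtx (off l j : nat) : nat :=
  if j == 0 then 0 else if j == l then 1 else off + j - 1.

Definition path_edge (off l x y : nat) : bool :=
  has (fun j => ((x == path_vtx off l j) && (y == path_vtx off l j.+1))
             || ((y == path_vtx off l j) && (x == path_vtx off l j.+1)))
      (iota 0 l).

Definition theta_adj_nat (l1 l2 l3 x y : nat) : bool :=
  [|| path_edge 2 l1 x y,
      path_edge (2 + (l1 - 1)) l2 x y
    | path_edge (2 + (l1 - 1) + (l2 - 1)) l3 x y].

Definition theta_vertex (l1 l2 l3 : nat) := 'I_(l1 + l2 + l3 - 1).

Definition theta_adj (l1 l2 l3 : nat) : rel (theta_vertex l1 l2 l3) :=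
  fun x y => theta_adj_nat l1 l2 l3 (val x) (val y).

Definition proper (V C : finType) (adj : rel V) (f : {ffun V -> C}) : bool :=
  [forall x, forall y, adj x y ==> (f x != f y)].

Definition P_list (V C : finType) (adj : rel V) (L : V -> {set C}) : nat :=
  #|[set f : {ffun V -> C} | [forall w, f w \in L w] && proper adj f]|.

Definition P_chrom (V : finType) (adj : rel V) (m : nat) : nat :=
  #|[set f : {ffun V -> 'I_m} | proper adj f]|.

Lemma theta_end_lt (l1 l2 l3 i : nat) :
  i < 2 -> 1 < l1 -> 0 < l2 -> i < l1 + l2 + l3 - 1.
Proof.
move=> hi h1 h2; lia.
Qed.

Definition theta_u (l1 l2 l3 : nat) (h1 : 1 < l1) (h2 : 0 < l2) :
  theta_vertex l1 l2 l3 := Ordinal (@theta_end_lt l1 l2 l3 0 isT h1 h2).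
Definition theta_v (l1 l2 l3 : nat) (h1 : 1 < l1) (h2 : 0 < l2) :
  theta_vertex l1 l2 l3 := Ordinal (@theta_end_lt l1 l2 l3 1 isT h1 h2).

Arguments theta_adj : clear implicits.
Arguments theta_u : clear implicits.
Arguments theta_v : clear implicits.

(* Main.v *)
Require Import Defs.
From mathcomp Require Import all_boot.
From mathcomp Require Import zify.
Set Implicit Arguments. Unset Strict Implicit. Unset Printing Implicit Defensive.

Fixpoint sd (m r : nat) : nat * nat :=
  if r is r'.+1 then ((m-1) * (sd m r').2, (sd m r').1 + (m-2) * (sd m r').2)
  else (0, 1).

Lemma sd_sum m r : 2 <= m -> (sd m r).1 + (m-1) * (sd m r).2 = (m-1)^(r.+1).
Proof.
move=> m2; elim: r => [|r IH] /=; first by rewrite muln1 expn1.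
rewrite expnS -IH; set s := (sd m r).1; set d := (sd m r).2.
have -> : m - 2 = (m - 1) - 1 by lia.
set M := m - 1; have : 1 <= M by rewrite /M; lia.
nia.
Qed.

Lemma sd_odd m j : 2 <= m ->
  m * (sd m (2*j).+1).1 = (m-1)^(2*j).+2 + (m-1) /\
  m * (sd m (2*j)).1 + (m-1) = (m-1)^(2*j).+1.
Proof.
move=> m2.
have step : forall r, m * (sd m r.+1).1 + m * (sd m r).1 = m * (m-1)^(r.+1).
  move=> r; rewrite -(sd_sum r m2) /=; set s := (sd m r).1; set d := (sd m r).2.
  nia.
have base : m * (sd m 0).1 + (m-1) = (m-1)^1 by rewrite /= muln0 add0n expn1.
elim: j => [|j [IH1 IH2]].
  split => //; have := step 0; rewrite /= muln0 addn0 => ->.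
  rewrite !expnS expn0; set M := m - 1.
  have -> : m = M + 1 by rewrite /M; lia.
  nia.
have e1 : (2 * j.+1) = (2*j).+2 by lia.
rewrite e1.
have s1 := step (2*j).+1; have s2 := step (2*j).+2.
move: s1 s2; rewrite !expnS.
set P := (m-1)^(2*j).
move: IH1 IH2; rewrite !expnS -/P.
set x0 := m * (sd m (2*j)).1.
set x1 := m * (sd m (2*j).+1).1.
set x2 := m * (sd m (2*j).+2).1.
set x3 := m * (sd m (2*j).+3).1.
set M := m - 1.
have -> : m = M + 1 by rewrite /M; lia.
move=> IH1 IH2 s1 s2.
split; nia.
Qed.

Section NP.
Variable C : finType.

Fixpoint N (a : C) (Ls : seq {set C}) (b : C) : nat :=
  if Ls is L :: Ls' then \sum_(c in L | c != a) N c Ls' b else (a != b).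

Lemma N_cat a Ls1 L Ls2 b :
  N a (Ls1 ++ L :: Ls2) b = \sum_(c in L) N a Ls1 c * N c Ls2 b.
Proof.
elim: Ls1 a => [|L1 Ls1 IH] a /=.
  rewrite big_mkcondr /=; apply: eq_bigr => c _.
  by rewrite eq_sym; case: (a != c); rewrite ?mul1n ?mul0n.
under eq_bigr do rewrite IH.
rewrite exchange_big /=; apply: eq_bigr => c _.
by rewrite big_distrl.
Qed.

Lemma N_rev a Ls b : N a Ls b = N b (rev Ls) a.
Proof.
elim/last_ind: Ls a b => [|Ls L IH] a b /=; first by rewrite eq_sym.
rewrite -cats1 N_cat rev_cat /= big_mkcondr /=.
apply: eq_bigr => c _; rewrite IH /=.
by case: (c != b); rewrite ?muln1 ?muln0.
Qed.

Lemma sum_neq_ge (B : {pred C}) a : #|B| - 1 <= \sum_(b in B) (a != b).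
Proof.
case: (boolP (a \in B)) => aB.
  rewrite (bigD1 a) //= eqxx add0n (cardD1 a) aB add1n subn1 /=.
  rewrite (eq_bigr (fun _ => 1)); last by move=> b /andP[_ ba]; rewrite eq_sym ba.
  rewrite -sum1_card; apply: eq_leq; apply: eq_bigl => b; by rewrite !inE andbC.
rewrite -sum1_card; apply: leq_trans (leq_subr _ _) _.
apply: leq_sum => b bB; case: eqP => // ab; by rewrite ab bB in aB.
Qed.

Lemma sumD1_ge (L : {pred C}) a K (F : C -> nat) :
  (forall c, c \in L -> c != a -> K <= F c) ->
  (#|L| - 1) * K <= \sum_(c in L | c != a) F c.
Proof.
move=> H.
apply: (@leq_trans (\sum_(c in [predD1 L & a]) K)).
  rewrite sum_nat_const leq_mul2r; apply/orP; right.
  rewrite (cardD1 a L); case: (a \in L) => /=; first by rewrite add1n subn1.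
  by rewrite add0n leq_subr.
rewrite [X in _ <= X](eq_bigl (fun c => c \in [predD1 L & a])); last by move=> c; rewrite !inE andbC.
apply: leq_sum => c; rewrite !inE => /andP [ca cL]; exact: H.
Qed.

Section Bounds.
Variable m : nat.
Hypothesis m3 : 3 <= m.

Definition allm (Ls : seq {set C}) := forall L, L \in Ls -> #|L| = m.

Lemma G1 (B : {pred C}) a Ls : allm Ls ->
  (m-1)^(size Ls) * (#|B| - 1) <= \sum_(b in B) N a Ls b.
Proof.
elim: Ls a => [|L Ls IH] a hL /=; first by rewrite mul1n sum_neq_ge.
rewrite exchange_big /= expnS -mulnA.
have hLm : #|L| = m by rewrite hL // mem_head.
have := @sumD1_ge L a ((m-1)^(size Ls) * (#|B| - 1)) (fun c => \sum_(b in B) N c Ls b).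
rewrite hLm; apply => c _ _; apply: IH => L' hL'; apply: hL; by rewrite inE hL' orbT.
Qed.

Lemma G2 a Ls b : allm Ls -> Ls != [::] ->
  (m-1)^(size Ls).-1 * (m-2) <= N a Ls b.
Proof.
elim: Ls a => [|L Ls IH] a hL //= _.
have hLm : #|L| = m by rewrite hL // mem_head.
case: Ls IH hL => [|L' Ls] IH hL.
  rewrite /= mul1n; apply: leq_trans (_ : #|[predD1 L & a]| - 1 <= _).
    have := cardD1 a L; rewrite hLm; case: (a \in L) => /=; lia.
  rewrite (eq_bigl (fun c => c \in [predD1 L & a])); last by move=> c; rewrite !inE andbC.
  under eq_bigr do rewrite eq_sym.
  exact: sum_neq_ge.
rewrite [size _]/= expnS -mulnA.
have := @sumD1_ge L a ((m-1)^(size Ls) * (m-2)) (fun c => N c (L' :: Ls) b).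
rewrite hLm; apply => c _ _; apply: (IH c) => //.
by move=> L0 h0; apply: hL; rewrite inE h0 orbT.
Qed.


Lemma exists_diff (A L : {set C}) : #|A| = m -> #|L| = m -> L != A ->
  exists2 c0, c0 \in A & c0 \notin L.
Proof.
move=> hA hL hLA; apply/subsetPn; apply: contra hLA => sub.
by rewrite eq_sym eqEcard sub hA hL leqnn.
Qed.

Lemma sum_over_set (L : {set C}) c0 (F : C -> nat) : c0 \notin L ->
  \sum_(d in L | d != c0) F d = \sum_(d in L) F d.
Proof.
move=> c0L; apply: eq_bigl => d; case: (boolP (d \in L)) => //= dL.
by apply/eqP => e; rewrite -e dL in c0L.
Qed.

Lemma coreS (A L : {set C}) P : #|A| = m -> #|L| = m -> L != A -> allm P ->
  P != [::] ->
  (m-1)^(size P).+2 <= \sum_(c in A) \sum_(d in L | d != c) N d P c.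
Proof.
move=> hA hL hLA hP hP0.
have [c0 c0A c0L] := exists_diff hA hL hLA.
rewrite (bigD1 c0) //=.
have h1 : (m-1)^(size P) * (m-1) <= \sum_(d in L | d != c0) N d P c0.
  rewrite sum_over_set //.
  under eq_bigr do rewrite N_rev.
  have := @G1 L c0 (rev P); rewrite size_rev hL; apply.
  by move=> L0; rewrite mem_rev; exact: hP.
have h2 : (m-1) * ((m-1) * ((m-1)^(size P).-1 * (m-2))) <=
   \sum_(c in A | c != c0) \sum_(d in L | d != c) N d P c.
  have := @sumD1_ge A c0 ((m-1) * ((m-1)^(size P).-1 * (m-2)))
     (fun c => \sum_(d in L | d != c) N d P c).
  rewrite hA; apply => c _ _.
  have := @sumD1_ge L c ((m-1)^(size P).-1 * (m-2)) (fun d => N d P c).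
  rewrite hL; apply => d _ _; exact: G2.
case: P hP hP0 h1 h2 => [|L0 P] // _ _ /=; rewrite !expnS.
set q := (m-1)^(size P) => h1 h2.
apply: leq_trans (leq_add h1 h2).
have -> : m - 2 = (m - 1) - 1 by lia.
set M := m - 1.
have hM : 1 <= M by rewrite /M; lia.
nia.
Qed.

Lemma coreT (A L : {set C}) (al be : C -> nat) p q : #|A| = m -> #|L| = m ->
  L != A -> (forall c, c \in A -> p <= al c) -> (forall d, d \in L -> q <= be d) ->
  p * q * (m * (m-1) + 1) <= \sum_(c in A) \sum_(d in L | d != c) al c * be d.
Proof.
move=> hA hL hLA hal hbe.
have [c0 c0A c0L] := exists_diff hA hL hLA.
rewrite (bigD1 c0) //=.
have h1 : m * (p * q) <= \sum_(d in L | d != c0) al c0 * be d.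
  rewrite sum_over_set // -hL -sum_nat_const; apply: leq_sum => d dL.
  by apply: leq_mul; [apply: hal | apply: hbe].
have h2 : (m-1) * ((m-1) * (p * q)) <=
   \sum_(c in A | c != c0) \sum_(d in L | d != c) al c * be d.
  have := @sumD1_ge A c0 ((m-1) * (p * q))
     (fun c => \sum_(d in L | d != c) al c * be d).
  rewrite hA; apply => c cA _.
  have := @sumD1_ge L c (p * q) (fun d => al c * be d).
  rewrite hL; apply => d dL _; by apply: leq_mul; [apply: hal | apply: hbe].
apply: leq_trans (leq_add h1 h2).
set M := m - 1.
have -> : m = M + 1 by rewrite /M; lia.
nia.
Qed.

Lemma sumAA (A : {set C}) (F : bool -> nat) : #|A| = m ->
  \sum_(a in A) \sum_(b in A) F (a == b) = m * F true + m * (m-1) * F false.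
Proof.
move=> hA.
rewrite (eq_bigr (fun _ => F true + (m-1) * F false)).
  by rewrite sum_nat_const hA mulnDr mulnA.
move=> a aA; rewrite (bigD1 a) //= eqxx; congr (_ + _).
rewrite (eq_bigr (fun _ => F false)); last first.
  by move=> b /andP [_ ba]; rewrite eq_sym (negbTE ba).
rewrite (eq_bigl (fun b => b \in [predD1 A & a])); last by move=> b; rewrite !inE andbC.
rewrite sum_nat_const; congr (_ * _).
by have := cardD1 a A; rewrite hA aA => ->; rewrite add1n subn1.
Qed.

Lemma sum_diag (A : {set C}) (G : C -> C -> nat) :
  \sum_(a in A) \sum_(b in A) (a == b) * G a b = \sum_(a in A) G a a.
Proof.
apply: eq_bigr => a aA; rewrite (bigD1 a) //= eqxx mul1n big1 ?addn0 //.
by move=> b /andP [_ ba]; rewrite eq_sym (negbTE ba).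
Qed.

Lemma N_unif (A : {set C}) Ls a b : #|A| = m -> all (fun L => L == A) Ls ->
  a \in A -> b \in A ->
  N a Ls b = if a == b then (sd m (size Ls)).1 else (sd m (size Ls)).2.
Proof.
move=> hA; elim: Ls a => [|L Ls IH] a /=.
  by move=> _ _ _; case: (a == b).
case/andP => /eqP -> hall aA bA.
rewrite (eq_bigr (fun c => if c == b then (sd m (size Ls)).1 else (sd m (size Ls)).2)); last first.
  by move=> c /andP [cA _]; apply: IH.
case: (eqVneq a b) => [<-|ab].
  rewrite (eq_bigr (fun _ => (sd m (size Ls)).2)); last first.
    by move=> c /andP [_ ca]; rewrite (negbTE ca).
  rewrite (eq_bigl (fun c => c \in [predD1 A & a])); last by move=> c; rewrite !inE andbC.
  rewrite sum_nat_const; congr (_ * _).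
  by have := cardD1 a A; rewrite hA aA => ->; rewrite add1n subn1.
rewrite (bigD1 b) /=; last by rewrite bA eq_sym ab.
rewrite eqxx; congr (_ + _).
rewrite (eq_bigr (fun _ => (sd m (size Ls)).2)); last first.
  by move=> c /andP [_ cb]; rewrite (negbTE cb).
rewrite (eq_bigl (fun c => c \in [predD1 [predD1 A & a] & b])); last first.
  by move=> c; rewrite !inE; case: (c \in A) (c == a) (c == b) => [] [] [].
rewrite sum_nat_const; congr (_ * _).
have := cardD1 b [predD1 A & a]; have := cardD1 a A.
rewrite hA aA !inE bA eq_sym ab /=. move=> -> ->; rewrite !add1n !subSS subn0; exact: erefl.
Qed.

Lemma defect (A : {set C}) Ls : ~~ all (fun L => L == A) Ls ->
  (exists L1 Ls', Ls = L1 :: Ls' /\ L1 != A) \/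
  (exists pre L rest, Ls = pre ++ A :: L :: rest /\ L != A).
Proof.
elim: Ls => [|L1 Ls IH] //=.
case: (eqVneq L1 A) => [->|h] /=; last by move=> _; left; exists L1, Ls.
move=> /IH [[L2 [Ls' [-> h2]]]|[pre [L [rest [-> h]]]]]; right.
  by exists [::], L2, Ls'.
by exists (A :: pre), L, rest.
Qed.

Lemma allm_cat Ls1 Ls2 : allm (Ls1 ++ Ls2) -> allm Ls1 /\ allm Ls2.
Proof. by move=> h; split=> L hL; apply: h; rewrite mem_cat hL ?orbT. Qed.

Lemma allm_cons L Ls : allm (L :: Ls) -> #|L| = m /\ allm Ls.
Proof. by move=> h; split; [apply: h; rewrite mem_head | move=> L0 h0; apply: h; rewrite inE h0 orbT]. Qed.

Lemma T_bound (A : {set C}) Ls : #|A| = m -> allm Ls -> ~~ all (fun L => L == A) Ls ->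
  (m-1)^(size Ls) * (m*(m-1)+1) <= \sum_(a in A) \sum_(b in A) N a Ls b.
Proof.
move=> hA hLs /defect [[L1 [Ls' [E0 h]]]|[pre [L [rest [E0 h]]]]]; subst Ls.
  have [hL1 hLs'] := allm_cons hLs.
  rewrite (eq_bigr (fun a => \sum_(d in L1 | d != a) 1 * \sum_(b in A) N d Ls' b)); last first.
    move=> a _ /=; rewrite exchange_big /=; apply: eq_bigr => d _; by rewrite mul1n.
  have := @coreT A L1 (fun _ => 1) (fun d => \sum_(b in A) N d Ls' b) 1 ((m-1)^(size Ls') * (m-1)) hA hL1 h.
  rewrite /= mul1n expnSr; apply => // d _.
  by have := @G1 A d Ls' hLs'; rewrite hA.
have [hpre hr] := allm_cat hLs.
have [_ hr'] := allm_cons hr.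
have [hL hrest] := allm_cons hr'.
have E : \sum_(a in A) \sum_(b in A) N a (pre ++ A :: L :: rest) b =
   \sum_(c in A) \sum_(d in L | d != c) (\sum_(a in A) N a pre c) * (\sum_(b in A) N d rest b).
  under eq_bigr do under eq_bigr do rewrite N_cat.
  under eq_bigr do rewrite exchange_big /=.
  rewrite exchange_big /=; apply: eq_bigr => c _.
  rewrite -big_distrr /=.
  under eq_bigr do rewrite -big_distrr /=.
  rewrite -big_distrl /=; congr (_ * _).
  by rewrite exchange_big.
rewrite E.
have := @coreT A L (fun c => \sum_(a in A) N a pre c) (fun d => \sum_(b in A) N d rest b)
  ((m-1)^(size pre) * (m-1)) ((m-1)^(size rest) * (m-1)) hA hL h.
have -> : size (pre ++ A :: L :: rest) = size pre + size rest + 2.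
  by rewrite size_cat /=; lia.
rewrite -!expnSr -expnD addn2 addSn addnS; apply.
  move=> c _; under eq_bigr do rewrite N_rev.
  have := @G1 A c (rev pre); rewrite size_rev hA -expnSr; apply.
  by move=> L0; rewrite mem_rev; exact: hpre.
by move=> d _; have := @G1 A d rest hrest; rewrite hA -expnSr.
Qed.

Lemma S_bound (A : {set C}) Ls : #|A| = m -> allm Ls -> ~~ all (fun L => L == A) Ls ->
  2 <= size Ls ->
  (m-1)^(size Ls).+1 <= \sum_(a in A) N a Ls a.
Proof.
move=> hA hLs /defect [[L1 [Ls' [E0 h]]]|[pre [L [rest [E0 h]]]]] hs; subst Ls.
  have [hL1 hLs'] := allm_cons hLs.
  apply: coreS => //; by case: Ls' hs {hLs} hLs'.
have [hpre hr] := allm_cat hLs.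
have [_ hr'] := allm_cons hr.
have [hL hrest] := allm_cons hr'.
have E : \sum_(a in A) N a (pre ++ A :: L :: rest) a =
   \sum_(c in A) \sum_(d in L | d != c) N d (rest ++ A :: pre) c.
  under eq_bigr do rewrite N_cat.
  under eq_bigr do under eq_bigr do rewrite /= big_distrr /=.
  rewrite exchange_big /=; apply: eq_bigr => c _.
  rewrite exchange_big /=; apply: eq_bigr => d _.
  by rewrite N_cat; apply: eq_bigr => a _; rewrite mulnC.
rewrite E.
have -> : (size (pre ++ A :: L :: rest)).+1 = (size (rest ++ A :: pre)).+2.
  by rewrite !size_cat /=; lia.
apply: coreS => //.
  move=> L0; rewrite mem_cat inE => /or3P [h0|/eqP ->|h0] //; [exact: hrest | exact: hpre].
by case: rest {E hr hr' hrest hLs hs}.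
Qed.

Lemma NX_ge (X : {set C}) a b : #|X| = m -> m - 2 + (a == b) <= N a [:: X] b.
Proof.
move=> hX /=.
rewrite (eq_bigl (fun c => c \in [predD1 X & a])); last by move=> c; rewrite !inE andbC.
have hc : m - 1 <= #|[predD1 X & a]|.
  have := cardD1 a X; rewrite hX; case: (a \in X) => -> /=; [rewrite add1n subn1 | rewrite add0n leq_subr] => //.
case: (eqVneq a b) => [<-|ab].
  rewrite (eq_bigr (fun _ => 1)); last by move=> c; rewrite !inE => /andP [-> _].
  rewrite sum1_card; apply: leq_trans hc; lia.
under eq_bigr do rewrite eq_sym.
apply: leq_trans (sum_neq_ge _ _); rewrite addn0; apply: leq_trans (leq_sub2r 1 hc); by rewrite -subnDA.
Qed.

Lemma LB_ge (A X Y : {set C}) Ls : #|X| = m -> #|Y| = m ->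
  \sum_(a in A) \sum_(b in A) ((m-2) + (a == b))^2 * N a Ls b <=
  \sum_(a in A) \sum_(b in A) N a [:: X] b * N a [:: Y] b * N a Ls b.
Proof.
move=> hX hY; apply: leq_sum => a _; apply: leq_sum => b _.
apply: leq_mul => //; rewrite -mulnn; apply: leq_mul; exact: NX_ge.
Qed.

Lemma LB_split (A : {set C}) Ls :
  \sum_(a in A) \sum_(b in A) ((m-2) + (a == b))^2 * N a Ls b =
  (m-2)^2 * \sum_(a in A) \sum_(b in A) N a Ls b + (2*m-3) * \sum_(a in A) N a Ls a.
Proof.
rewrite -(sum_diag A (fun a b => N a Ls b)) !big_distrr -big_split /=.
apply: eq_bigr => a _; rewrite !big_distrr -big_split /=.
apply: eq_bigr => b _; case: (a == b) => /=; set x := N a Ls b; nia.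
Qed.

Lemma LB_unif (A : {set C}) Ls : #|A| = m -> all (fun L => L == A) Ls ->
  \sum_(a in A) \sum_(b in A) ((m-2) + (a == b))^2 * N a Ls b =
  m * ((m-1)^2 * (sd m (size Ls)).1) + m * (m-1) * ((m-2)^2 * (sd m (size Ls)).2).
Proof.
move=> hA hall.
pose F := fun e : bool => ((m-2) + e)^2 * (if e then (sd m (size Ls)).1 else (sd m (size Ls)).2).
transitivity (\sum_(a in A) \sum_(b in A) F (a == b)).
  apply: eq_bigr => a aA; apply: eq_bigr => b bA; by rewrite /F (N_unif hA hall aA bA).
rewrite sumAA // /F /= addn0; congr (m * (_ ^ 2 * _) + _); lia.
Qed.
End Bounds.
End NP.

Section Cnt.
Variable C : finType.

Definition inL (c : C) (L : {set C}) : bool := c \in L.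

Fixpoint cntR (n : nat) (P : seq C -> bool) : nat :=
  if n is n'.+1 then \sum_(c : C) cntR n' (fun s => P (c :: s)) else P [::].

Lemma eq_cntR n P Q : (forall s, P s = Q s) -> cntR n P = cntR n Q.
Proof.
elim: n P Q => [|n IH] P Q h /=; first by rewrite h.
by apply: eq_bigr => c _; apply: IH.
Qed.

Lemma cntR_card n (P : seq C -> bool) :
  #|[set t : n.-tuple C | P t]| = cntR n P.
Proof.
elim: n P => [|n IH] P /=.
  rewrite -sum1_card (eq_bigr (fun _ => 1)) //.
  have -> : \sum_(i in [set t : 0.-tuple C | P t]) 1 = \sum_(t : 0.-tuple C) P t.
    rewrite big_mkcond /=; apply: eq_bigr => t _; by rewrite inE; case: (P t).
  rewrite (eq_bigr (fun _ => (P [::] : nat))); last by move=> t _; rewrite tuple0.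
  by rewrite sum_nat_const card_tuple expn0 mul1n.
rewrite -sum1_card.
have -> : \sum_(i in [set t : n.+1.-tuple C | P t]) 1 = \sum_(t : n.+1.-tuple C) P t.
  rewrite big_mkcond /=; apply: eq_bigr => t _; by rewrite inE; case: (P t).
rewrite (reindex (fun p : C * n.-tuple C => [tuple of p.1 :: p.2])) /=; last first.
  exists (fun t : n.+1.-tuple C => (thead t, [tuple of behead t])).
    by move=> [c t] _; congr (_, _); apply: val_inj.
  by move=> t _; rewrite [RHS]tuple_eta.
rewrite -(pair_bigA _ (fun c (t : n.-tuple C) => (P (c :: t) : nat))) /=.
apply: eq_bigr => c _; rewrite -IH -sum1_card big_mkcond /=.
rewrite [RHS]big_mkcond /=; by apply: eq_bigr => t _; rewrite inE; case: (P _).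
Qed.

Lemma cntR_and n (B : bool) P : cntR n (fun s => B && P s) = B * cntR n P.
Proof.
elim: n P => [|n IH] P /=; first by rewrite mulnb.
by rewrite big_distrr /=; apply: eq_bigr => c _; rewrite IH.
Qed.

Lemma cntR_N a (Ls : seq {set C}) b : cntR (size Ls)
   (fun w => all2 inL w Ls && path (fun x y => x != y) a (rcons w b)) = N a Ls b.
Proof.
elim: Ls a => [|L Ls IH] a /=; first by rewrite andbT.
rewrite [RHS]big_mkcond /=; apply: eq_bigr => c _.
rewrite (eq_cntR _ (Q := fun s => ((c \in L) && (a != c)) && (all2 inL s Ls && path (fun x y => x != y) c (rcons s b)))); last first.
  move=> s /=; rewrite /inL; by case: (c \in L); case: (a != c); case: (all2 _ _ _).
rewrite cntR_and IH eq_sym; by case: (c \in L); case: (c != a); rewrite /= ?mul1n ?mul0n.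
Qed.

End Cnt.

Lemma all2_nth (T1 T2 : Type) (r : T1 -> T2 -> bool) x0 y0 s t :
  size s = size t ->
  all2 r s t <-> (forall i, i < size s -> r (nth x0 s i) (nth y0 t i)).
Proof.
elim: s t => [|x s IH] [|y t] //=.
case=> e; split.
- case/andP => h1 /(IH _ e) h2 [|i] //= hi; exact: h2.
- move=> h; rewrite (h 0) //=; apply/(IH _ e) => i hi; exact: (h i.+1).
Qed.

Lemma path_edgeP off l x y : path_edge off l x y ->
  exists2 j, j < l & ((x = path_vtx off l j) /\ (y = path_vtx off l j.+1)) \/
                    ((y = path_vtx off l j) /\ (x = path_vtx off l j.+1)).
Proof.
case/hasP => j; rewrite mem_iota add0n => /andP [_ hj].
case/orP => /andP [/eqP -> /eqP ->]; exists j => //; by [left | right].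
Qed.

Lemma path_edge_vtx off l j : j < l ->
  path_edge off l (path_vtx off l j) (path_vtx off l j.+1).
Proof.
move=> hj; apply/hasP; exists j; first by rewrite mem_iota add0n hj.
by rewrite !eqxx.
Qed.

Section Formula.
Variables (C : finType) (k : nat) (L : theta_vertex 2 2 (2*k) -> {set C}).
Hypothesis k1 : 0 < k.

Local Notation n := (2 + 2 + 2 * k - 1).
Definition u0 : 'I_n := theta_u 2 2 (2*k) isT isT.
Definition Li i := L (insubd u0 i).
Definition Lsw := [seq Li (4 + j) | j <- iota 0 (2*k-1)].
Definition Good (s : seq C) := match s with
 | c0 :: c1 :: c2 :: c3 :: w => [&& c0 \in Li 0, c1 \in Li 1, c2 \in Li 2, c3 \in Li 3,
      all2 (@inL C) w Lsw, c0 != c2, c2 != c1, c0 != c3, c3 != c1 &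
      path (fun x y => x != y) c0 (rcons w c1)]
 | _ => false end.

Lemma hn : n = (2*k-1).+4. Proof. lia. Qed.

Lemma key (t : n.-tuple C) :
  ([forall x, (finfun_of_tuple t) x \in L x] &&
   Defs.proper (theta_adj 2 2 (2*k)) (finfun_of_tuple t)) = Good t.
Proof.
case: t => s hs /=.
have hsz : size s = (2*k-1).+4 by move/eqP: hs => ->; lia.
case: s hs hsz => [|c0 [|c1 [|c2 [|c3 w]]]] hs //= [hw].
pose g := nth c0 [:: c0, c1, c2, c3 & w].
have fg : forall x : 'I_n, finfun_of_tuple (Tuple hs) x = g x.
  by move=> x; rewrite ffunE (tnth_nth c0).
have Lx : forall x : 'I_n, L x = Li x by move=> x; rewrite /Li valKd.
have szL : size w = size Lsw by rewrite size_map size_iota hw.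
have nthL : forall j, j < 2*k-1 -> nth set0 Lsw j = Li (4 + j).
  by move=> j hj; rewrite (nth_map 0) ?size_iota // nth_iota.
have A1 : [forall x, finfun_of_tuple (Tuple hs) x \in L x] =
    [&& c0 \in Li 0, c1 \in Li 1, c2 \in Li 2, c3 \in Li 3 & all2 (@inL C) w Lsw].
  apply/forallP/idP.
  - move=> H.
    have H' : forall i, i < n -> g i \in Li i.
      by move=> i hi; have := H (Ordinal hi); rewrite fg Lx.
    rewrite (H' 0) ?(H' 1) ?(H' 2) ?(H' 3) /=; try lia.
    apply/(all2_nth (@inL C) c0 set0 szL) => j hj.
    rewrite /inL nthL -?hw //; have := H' (4 + j); rewrite /g /= add0n; apply; lia.
  - case/and5P => h0 h1 h2 h3 hall x; rewrite fg Lx.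
    case: x => [[|[|[|[|j]]]] hx] //=.
    have hj : j < size w by rewrite hw; lia.
    have := (proj1 (all2_nth (@inL C) c0 set0 szL) hall) j hj.
    by rewrite /inL nthL -?hw.
have gpv1 : forall i, i < 2*k -> g (path_vtx 4 (2*k) i) = nth c0 (c0 :: rcons w c1) i.
  rewrite /path_vtx => -[|i] hi; first by [].
  have -> : (i.+1 == 0) = false by [].
  have -> : (i.+1 == 2 * k) = false by apply/eqP; lia.
  have -> : 4 + i.+1 - 1 = 4 + i by lia.
  transitivity (nth c0 w i); first by [].
  rewrite -[RHS]/(nth c0 (rcons w c1) i) nth_rcons hw ifT //; lia.
have gpv2 : forall i, i < 2*k -> g (path_vtx 4 (2*k) i.+1) = nth c0 (rcons w c1) i.
  rewrite /path_vtx => i hi; rewrite nth_rcons hw.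
  have -> : (i.+1 == 0) = false by [].
  case: (eqVneq i.+1 (2*k)) => [e|ne].
    by rewrite ifF ?ifT //; apply/eqP; lia.
  have -> : 4 + i.+1 - 1 = 4 + i by lia.
  rewrite ifT; last by move/eqP: ne; lia.
  by [].
have pvlt : forall i, i <= 2*k -> path_vtx 4 (2*k) i < n.
  by rewrite /path_vtx => i hi; case: eqP => _; [|case: eqP]; lia.
have adj4 : forall j, j < 2*k ->
    theta_adj_nat 2 2 (2*k) (path_vtx 4 (2*k) j) (path_vtx 4 (2*k) j.+1).
  move=> j hj; rewrite /theta_adj_nat; apply/or3P; apply: Or33.
  exact: path_edge_vtx.
have pv2 : [/\ path_vtx 2 2 0 = 0, path_vtx 2 2 1 = 2 & path_vtx 2 2 2 = 1] by [].
have pv3 : [/\ path_vtx 3 2 0 = 0, path_vtx 3 2 1 = 3 & path_vtx 3 2 2 = 1] by [].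
have B1 : Defs.proper (theta_adj 2 2 (2*k)) (finfun_of_tuple (Tuple hs)) =
    [&& c0 != c2, c2 != c1, c0 != c3, c3 != c1 & path (fun x y => x != y) c0 (rcons w c1)].
  apply/idP/idP.
  - move=> H.
    have H' : forall x y, x < n -> y < n -> theta_adj_nat 2 2 (2*k) x y -> g x != g y.
      move=> x y hx hy hxy.
      have := implyP (forallP (forallP H (Ordinal hx)) (Ordinal hy)).
      by rewrite /theta_adj /= !fg; apply.
    have a02 : theta_adj_nat 2 2 (2*k) 0 2.
      by rewrite /theta_adj_nat; apply/or3P; apply: Or31; exact: (@path_edge_vtx 2 2 0).
    have a21 : theta_adj_nat 2 2 (2*k) 2 1.
      by rewrite /theta_adj_nat; apply/or3P; apply: Or31; exact: (@path_edge_vtx 2 2 1).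
    have a03 : theta_adj_nat 2 2 (2*k) 0 3.
      by rewrite /theta_adj_nat; apply/or3P; apply: Or32; exact: (@path_edge_vtx 3 2 0).
    have a31 : theta_adj_nat 2 2 (2*k) 3 1.
      by rewrite /theta_adj_nat; apply/or3P; apply: Or32; exact: (@path_edge_vtx 3 2 1).
    have h0n : 0 < n by lia.
    have h1n : 1 < n by lia.
    have h2n : 2 < n by lia.
    have h3n : 3 < n by lia.
    have e02 := H' 0 2 h0n h2n a02.
    have e21 := H' 2 1 h2n h1n a21.
    have e03 := H' 0 3 h0n h3n a03.
    have e31 := H' 3 1 h3n h1n a31.
    rewrite /g /= in e02 e21 e03 e31; rewrite e02 e21 e03 e31 /=.
    apply/(pathP c0) => i; rewrite size_rcons hw => hi.
    have hi' : i < 2 * k by clear -hi k1; lia.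
    have hi1 : i <= 2 * k by clear -hi' ; lia.
    have hi2 : i.+1 <= 2 * k by clear -hi' ; lia.
    rewrite -gpv1 // -gpv2 //; apply: H'; [exact: pvlt | exact: pvlt | exact: adj4].
  - case/and5P => e02 e21 e03 e31 hp.
    apply/forallP => x; apply/forallP => y; apply/implyP; rewrite /theta_adj !fg.
    change (theta_adj_nat 2 2 (2*k) x y -> g x != g y).
    move: (nat_of_ord x) (nat_of_ord y) => X Y.
    rewrite /theta_adj_nat.
    change (2 + (2 - 1) + (2 - 1)) with 4; change (2 + (2 - 1)) with 3.
    case/or3P.
    + case/path_edgeP => j hj [[-> ->]|[-> ->]]; case: pv2 => p0 p1 p2;
        (case: j hj => [|[|j]] hj; [rewrite p0 p1 | rewrite p1 p2 | by []]).
      * exact: e02.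
      * exact: e21.
      * by rewrite eq_sym; exact: e02.
      * by rewrite eq_sym; exact: e21.
    + case/path_edgeP => j hj [[-> ->]|[-> ->]]; case: pv3 => p0 p1 p2;
        (case: j hj => [|[|j]] hj; [rewrite p0 p1 | rewrite p1 p2 | by []]).
      * exact: e03.
      * exact: e31.
      * by rewrite eq_sym; exact: e03.
      * by rewrite eq_sym; exact: e31.
    + case/path_edgeP => j hj [[-> ->]|[-> ->]];
      have hj' : j < size (rcons w c1) by rewrite size_rcons hw; clear -hj k1; lia.
      * by have := (pathP c0 hp) j hj'; rewrite -gpv1 // -gpv2.
      * by have := (pathP c0 hp) j hj'; rewrite -gpv1 // -gpv2 // eq_sym.
rewrite A1 B1 /Good; by rewrite -!andbA.
Qed.

Lemma formula : P_list (theta_adj 2 2 (2*k)) L =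
  \sum_(a in Li 0) \sum_(b in Li 1) N a [:: Li 2] b * N a [:: Li 3] b * N a Lsw b.
Proof.
rewrite /P_list.
have -> : [set f : {ffun theta_vertex 2 2 (2*k) -> C} | [forall w, f w \in L w] &&
     Defs.proper (theta_adj 2 2 (2*k)) f] = finfun_of_tuple @: [set t : n.-tuple C | Good t].
  apply/setP => f; rewrite inE; apply/idP/imsetP.
  - move=> H; exists (tuple_of_finfun f); last by rewrite tuple_of_finfunK.
    by rewrite inE -key tuple_of_finfunK.
  - by case=> t; rewrite inE -key => ht ->.
rewrite card_imset; last exact: (can_inj (@finfun_of_tupleK _ _)).
rewrite cntR_card hn /=.
have szL : size Lsw = 2*k-1 by rewrite size_map size_iota.
have E : forall c0 c1 c2 c3,
    cntR (2*k-1) (fun w => Good [:: c0, c1, c2, c3 & w]) =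
    [&& c0 \in Li 0, c1 \in Li 1, c2 \in Li 2, c3 \in Li 3, c0 != c2, c2 != c1, c0 != c3 & c3 != c1]
      * N c0 Lsw c1.
  move=> c0 c1 c2 c3.
  rewrite (eq_cntR _ (Q := fun w =>
   [&& c0 \in Li 0, c1 \in Li 1, c2 \in Li 2, c3 \in Li 3, c0 != c2, c2 != c1, c0 != c3 & c3 != c1]
   && (all2 (@inL C) w Lsw && path (fun x y => x != y) c0 (rcons w c1)))).
    by rewrite cntR_and -szL cntR_N.
  move=> w; rewrite /Good.
  case: (all2 _ _ _); rewrite ?andbF ?andbT ?andTb -?andbA //.
under eq_bigr do under eq_bigr do under eq_bigr do under eq_bigr do rewrite E.
rewrite [RHS]big_mkcond; apply: eq_bigr => c0 _.
case h0 : (c0 \in Li 0); last first.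
  by rewrite big1 // => c1 _; rewrite big1 // => c2 _; rewrite big1 // => c3 _.
rewrite [RHS]big_mkcond; apply: eq_bigr => c1 _.
case h1 : (c1 \in Li 1); last first.
  by rewrite big1 // => c2 _; rewrite big1 // => c3 _.
under eq_bigr do rewrite -big_distrl /=. rewrite -big_distrl /=; congr (_ * _).
rewrite [RHS]big_distrl [RHS]big_mkcond; apply: eq_bigr => c2 _.
case: ifP => h2.
  rewrite big_distrr [RHS]big_mkcond /=; apply: eq_bigr => c3 _.
  move/andP: h2 => [-> h2]; rewrite eq_sym in h2; rewrite h2 /=.
  case: (c3 \in Li 3) => //=; case: (eqVneq c3 c0) => [->|ne]; first by rewrite /= ?eqxx ?andbF.
  by case: (c2 != c1); case: (c3 != c1).
apply: big1 => c3 _.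
move: h2; case: (c2 \in Li 2) => //= h2.
move/negbFE/eqP: h2 => ->. by rewrite eqxx andbF.
Qed.

End Formula.

Lemma arith m X s d T S : 3 <= m -> (m-1)^3 <= X ->
  s + (m-1)*d = (m-1)*X -> m*s = (m-1)*X + (m-1) ->
  X*(m*(m-1)+1) <= T -> (m-1)*X <= S ->
  m*((m-1)^2*s) + m*(m-1)*((m-2)^2*d) <= (m-2)^2*T + (2*m-3)*S.
Proof.
move=> m3; have [P ->] : exists P, m = P + 3 by exists (m-3); lia.
have -> : P + 3 - 1 = P + 2 by lia.
have -> : P + 3 - 2 = P + 1 by lia.
have -> : 2 * (P + 3) - 3 = 2 * P + 3 by lia.
rewrite !expnS expn0 !muln1.
move=> hX e1 e2 hT hS.
nia.
Qed.

Theorem lemma18 (k m : nat) (C : finType)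
  (L : theta_vertex 2 2 (2 * k) -> {set C}) :
  2 <= k -> 3 <= m ->
  (forall w, #|L w| = m) ->
  L (theta_u 2 2 (2 * k) isT isT) = L (theta_v 2 2 (2 * k) isT isT) ->
  P_chrom (theta_adj 2 2 (2 * k)) m <= P_list (theta_adj 2 2 (2 * k)) L.
Proof.
move=> k2 m3 hL huv.
have k1 : 0 < k by lia.
have Pc : P_chrom (theta_adj 2 2 (2*k)) m =
    P_list (theta_adj 2 2 (2*k)) (fun _ => [set: 'I_m]).
  rewrite /P_chrom /P_list; apply: eq_card => f; rewrite !inE.
  by rewrite (_ : [forall w, f w \in [set: 'I_m]] = true) //; apply/forallP => w; rewrite inE.
rewrite Pc !formula //.
set LT := fun _ : theta_vertex 2 2 (2 * k) => [set: 'I_m].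
have hT : forall i, Li LT i = [set: 'I_m] by [].
have hTm : #|[set: 'I_m]| = m by rewrite cardsT card_ord.
have szT : size (Lsw LT) = 2 * k - 1 by rewrite size_map size_iota.
have allT : all (fun L0 => L0 == [set: 'I_m]) (Lsw LT).
  by apply/allP => L0 /mapP [j _ ->].
have NT : forall (a b : 'I_m), N a [:: [set: 'I_m]] b = (m - 2) + (a == b).
  move=> a b; rewrite (N_unif hTm) ?inE /= ?eqxx //.
  by case: (a == b) => /=; lia.
rewrite !hT.
under eq_bigr do under eq_bigr do rewrite !NT mulnn.
rewrite (LB_unif m3 hTm allT) szT.
set A := Li L 0.
have hA : #|A| = m by rewrite /A /Li hL.
have h1 : Li L 1 = A.
  rewrite /A /Li (_ : insubd (u0 k) 1 = theta_v 2 2 (2*k) isT isT); last first.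
    by apply: val_inj; rewrite /= insubdK // inE; lia.
  rewrite (_ : insubd (u0 k) 0 = theta_u 2 2 (2*k) isT isT) //.
  by apply: val_inj; rewrite /= insubdK // inE; lia.
rewrite h1.
have hm : forall L0, L0 \in Lsw L -> #|L0| = m.
  by move=> L0 /mapP [j _ ->]; rewrite /Li hL.
have szL : size (Lsw L) = 2 * k - 1 by rewrite size_map size_iota.
apply: leq_trans (LB_ge m3 _ _ (hL _) (hL _)).
case: (boolP (all (fun L0 => L0 == A) (Lsw L))) => hall.
  by rewrite (LB_unif m3 hA hall) szL.
rewrite (LB_split m3).
have hT1 := T_bound m3 hA hm hall.
have hS1 := S_bound m3 hA hm hall.
rewrite szL in hT1 hS1.
have e1 := sd_sum (2 * k - 1) (ltnW m3).
have [e2 _] := sd_odd (k - 1) (ltnW m3).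
have er : (2 * (k - 1)).+1 = 2 * k - 1 by lia.
rewrite er in e2.
apply: (@arith m ((m-1)^(2*k-1))) => //.
- apply: leq_pexp2l; lia.
- by rewrite e1 expnS.
- by rewrite e2 expnS.
- by rewrite -expnS; apply: hS1; lia.
Qed.
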